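(* Let $a>0$ and $t>0$, and let $x_{\rm L}(1,t,a)\le x_{\rm R}(1,t,a)$ be the middle and largest of the three real roots of the cubic $x\{4ax^2-(8a^2+20at-t^2)x+4(a-t)^3\}$ (the left and right edges of the support of the three-parametric MP density with $r=1$). (i) If $0<t<a$, then \[ x_{\rm L}(1,t,a)=\frac{1}{8a}\{8a^2+20at-t^2-\sqrt t\,(8a+t)^{3/2}\},\qquad x_{\rm R}(1,t,a)=\frac{1}{8a}\{8a^2+20at-t^2+\sqrt t\,(8a+t)^{3/2}\}, \] and $0<x_{\rm L}(1,t,a)<x_{\rm R}(1,t,a)$. (ii) If $t\ge a$, then $x_{\rm L}(1,t,a)=0$ and \[ x_{\rm R}(1,t,a)=\frac{1}{8a}\{8a^2+20at-t^2+\sqrt t\,(8a+t)^{3/2}\}>0. \]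
   Context: For $r=1$ the cubic $S(x;r,t,a)=4ax^3-\{8a^2+4a(3r+2)t-t^2\}x^2+2[2a^3-2a^2(5r-2)t+a\{r(6r-1)+1\}t^2-(r+1)t^3]x+(r-1)^2t^2\{a^2-a(4r-2)t+t^2\}$ reduces to $x\{4ax^2-(8a^2+20at-t^2)x+4(a-t)^3\}$; the edges $x_{\rm L}(r,t,a)$, $x_{\rm R}(r,t,a)$ of the support are defined as the middle and largest real roots of $S(\cdot;r,t,a)$. *)

(* Defs.v *)
From Stdlib Require Import Reals.
Open Scope R_scope.

Definition S (x r t a : R) : R :=
  4*a*x^3
  - (8*a^2 + 4*a*(3*r+2)*t - t^2) * x^2
  + 2*(2*a^3 - 2*a^2*(5*r-2)*t + a*(r*(6*r-1)+1)*t^2 - (r+1)*t^3) * x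
  + (r-1)^2 * t^2 * (a^2 - a*(4*r-2)*t + t^2).

(* [edges r t a xL xR]: S(.;r,t,a) (leading coefficient 4a) has three real
   roots x1 <= xL <= xR (counted with multiplicity), i.e. xL is the middle
   and xR the largest real root. *)
Definition edges (r t a xL xR : R) : Prop :=
  exists x1 : R, x1 <= xL /\ xL <= xR /\
    forall x : R, S x r t a = 4*a*(x - x1)*(x - xL)*(x - xR).

(* Main.v *)
Require Import Defs.
From Stdlib Require Import Reals Lra Psatz.
Open Scope R_scope.

Theorem lemma2p5 (a t : R) (ha : 0 < a) (ht : 0 < t) :
  (exists xL xR : R, edges 1 t a xL xR) /\
  (forall xL xR : R, edges 1 t a xL xR ->
    (t < a ->
       xL = / (8*a) * (8*a^2 + 20*a*t - t^2 - sqrt t * (sqrt (8*a + t))^3) /\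
       xR = / (8*a) * (8*a^2 + 20*a*t - t^2 + sqrt t * (sqrt (8*a + t))^3) /\
       0 < xL /\ xL < xR) /\
    (a <= t ->
       xL = 0 /\
       xR = / (8*a) * (8*a^2 + 20*a*t - t^2 + sqrt t * (sqrt (8*a + t))^3) /\
       0 < xR)).
Proof.
  assert (hs1 : sqrt t * sqrt t = t) by (apply sqrt_sqrt; lra).
  assert (hs2 : sqrt (8*a+t) * sqrt (8*a+t) = 8*a+t) by (apply sqrt_sqrt; lra).
  assert (p1 : 0 < sqrt t) by (apply sqrt_lt_R0; lra).
  assert (p2 : 0 < sqrt (8*a+t)) by (apply sqrt_lt_R0; lra).
  set (B := 8*a^2 + 20*a*t - t^2).
  set (D := sqrt t * (sqrt (8*a + t))^3).
  assert (HD : 0 < D) by (unfold D; apply Rmult_lt_0_compat; [lra| apply pow_lt; lra]).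
  assert (HD2 : D*D = t*(8*a+t)^3).
  { unfold D. replace (sqrt t * sqrt (8 * a + t) ^ 3 * (sqrt t * sqrt (8 * a + t) ^ 3))
      with ((sqrt t * sqrt t) * (sqrt (8*a+t) * sqrt (8*a+t))^3) by ring.
    rewrite hs1, hs2. ring. }
  assert (HBD : B*B - D*D = 64*a*(a-t)^3) by (rewrite HD2; unfold B; ring).
  set (qm := / (8*a) * (B - D)).
  set (qp := / (8*a) * (B + D)).
  assert (Hsum : qm + qp = B/(4*a)) by (unfold qm, qp; field; lra).
  assert (Hprod : qm * qp = (a-t)^3/a).
  { unfold qm, qp. replace (/ (8 * a) * (B - D) * (/ (8 * a) * (B + D)))
      with ((B*B - D*D)/(64*a*a)) by (field; lra).
    rewrite HBD. field; lra. }
  assert (Hlt : qm < qp).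
  { unfold qm, qp. apply Rmult_lt_compat_l. apply Rinv_0_lt_compat; lra. lra. }
  assert (HS : forall x, S x 1 t a = 4*a*(x-0)*(x-qm)*(x-qp)).
  { intro x. replace (4*a*(x-0)*(x-qm)*(x-qp)) with (4*a*x*(x*x - (qm+qp)*x + qm*qp)) by ring.
    rewrite Hsum, Hprod. unfold S, B. field; lra. }
  assert (Hqp : 0 < qp).
  { destruct (Rle_or_lt 0 B) as [hb|hb].
    - unfold qp. apply Rmult_lt_0_compat. apply Rinv_0_lt_compat; lra. lra.
    - assert (a < t).
      { destruct (Rlt_or_le t a) as [h|h]; [|destruct h as [h|h]]; auto;
        unfold B in hb; subst; nra. }
      assert (0 < (t-a)^3) by (apply pow_lt; lra).
      assert (D*D > B*B) by (replace ((a-t)^3) with (-(t-a)^3) in HBD by ring; nra).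
      unfold qp. apply Rmult_lt_0_compat. apply Rinv_0_lt_compat; lra. nra. }
  assert (Hroot : forall y, S y 1 t a = 0 -> y = 0 \/ y = qm \/ y = qp).
  { intros y hy. rewrite HS in hy.
    destruct (Req_dec y 0); auto. destruct (Req_dec y qm); auto.
    destruct (Req_dec y qp); auto. exfalso.
    assert (4*a*(y-0) <> 0) by (apply Rmult_integral_contrapositive; split; lra).
    assert (4*a*(y-0)*(y-qm) <> 0) by (apply Rmult_integral_contrapositive; split; lra).
    assert (4*a*(y-0)*(y-qm)*(y-qp) <> 0) by (apply Rmult_integral_contrapositive; split; lra).
    auto. }
  assert (Hroot2 : forall x1 xL xR y, (forall x, S x 1 t a = 4*a*(x-x1)*(x-xL)*(x-xR)) ->
     S y 1 t a = 0 -> y = x1 \/ y = xL \/ y = xR).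
  { intros x1 xL xR y H hy. rewrite H in hy.
    destruct (Req_dec y x1); auto. destruct (Req_dec y xL); auto.
    destruct (Req_dec y xR); auto. exfalso.
    assert (4*a*(y-x1) <> 0) by (apply Rmult_integral_contrapositive; split; lra).
    assert (4*a*(y-x1)*(y-xL) <> 0) by (apply Rmult_integral_contrapositive; split; lra).
    assert (4*a*(y-x1)*(y-xL)*(y-xR) <> 0) by (apply Rmult_integral_contrapositive; split; lra).
    auto. }
  assert (Z0 : S 0 1 t a = 0) by (rewrite HS; ring).
  assert (Zm : S qm 1 t a = 0) by (rewrite HS; ring).
  assert (Zp : S qp 1 t a = 0) by (rewrite HS; ring).
  split.
  - destruct (Rlt_or_le t a) as [h|h].
    + assert (0 < (a-t)^3) by (apply pow_lt; lra).
      assert (0 < (a-t)^3/a) by (apply Rdiv_lt_0_compat; lra).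
      assert (0 < qm) by nra.
      exists qm, qp. exists 0. split; [lra|split; [lra|]]. intro x. rewrite HS. ring.
    + assert (0 <= (t-a)^3) by (apply pow_le; lra).
      assert ((a-t)^3/a <= 0).
      { replace ((a-t)^3/a) with (-((t-a)^3/a)) by (field; lra).
        assert (0 <= (t-a)^3/a) by (apply Rmult_le_pos; [lra| left; apply Rinv_0_lt_compat; lra]). lra. }
      assert (qm <= 0) by nra.
      exists 0, qp. exists qm. split; [lra|split; [lra|]]. intro x. rewrite HS. ring.
  - intros xL xR [x1 [h1 [h2 H]]].
    assert (E : forall x, (x-x1)*(x-xL)*(x-xR) = x*(x-qm)*(x-qp)).
    { intro x. assert (e := H x). rewrite HS in e.
      apply Rmult_eq_reg_l with (4*a); [|lra].
      replace (4 * a * ((x - x1) * (x - xL) * (x - xR))) with (4*a*(x-x1)*(x-xL)*(x-xR)) by ring.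
      rewrite <- e. ring. }
    assert (Esum : x1 + xL + xR = qm + qp).
    { assert (e0 := E 0). assert (e1 := E 1). assert (e2 := E (-1)).
      assert (k1 : (1-x1)*(1-xL)*(1-xR) + (-1-x1)*(-1-xL)*(-1-xR) - 2*((0-x1)*(0-xL)*(0-xR))
                   = -2*(x1+xL+xR)) by ring.
      assert (k2 : 1*(1-qm)*(1-qp) + (-1)*(-1-qm)*(-1-qp) - 2*(0*(0-qm)*(0-qp))
                   = -2*(qm+qp)) by ring.
      rewrite e0, e1, e2 in k1. lra. }
    assert (R1 : S x1 1 t a = 0) by (rewrite H; ring).
    assert (RL : S xL 1 t a = 0) by (rewrite H; ring).
    assert (RR : S xR 1 t a = 0) by (rewrite H; ring).
    apply Hroot in R1. apply Hroot in RL. apply Hroot in RR.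
    assert (P0 := Hroot2 x1 xL xR 0 H Z0).
    assert (Pm := Hroot2 x1 xL xR qm H Zm).
    assert (Pp := Hroot2 x1 xL xR qp H Zp).
    assert (XR : xR = qp) by (destruct RR as [?|[?|?]]; destruct Pp as [?|[?|?]]; lra).
    split.
    + intro h.
      assert (0 < (a-t)^3) by (apply pow_lt; lra).
      assert (0 < (a-t)^3/a) by (apply Rdiv_lt_0_compat; lra).
      assert (0 < qm) by nra.
      assert (X1 : x1 = 0) by (destruct R1 as [?|[?|?]]; destruct P0 as [?|[?|?]]; lra).
      assert (XL : xL = qm) by lra.
      split; [exact XL|split; [exact XR|lra]].
    + intro h.
      assert (0 <= (t-a)^3) by (apply pow_le; lra).
      assert ((a-t)^3/a <= 0).
      { replace ((a-t)^3/a) with (-((t-a)^3/a)) by (field; lra).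
        assert (0 <= (t-a)^3/a) by (apply Rmult_le_pos; [lra| left; apply Rinv_0_lt_compat; lra]). lra. }
      assert (qm <= 0) by nra.
      assert (X1 : x1 = qm) by (destruct R1 as [?|[?|?]]; destruct Pm as [?|[?|?]]; lra).
      split; [lra|split; [exact XR|lra]].
Qed.
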